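(* Let $\gamma$ be a join-irreducible element of the weak order on $B_n$ with associated signed subset $A$ and associated $m,M$ as described below. Then (i) $\deg(\gamma)=1$ if and only if $|(m,M)\cap(\pm[n])|=0$; and (ii) $\deg(\gamma)=2$ if and only if either $|(m,M)\cap(\pm[n])|=1$ or $(m,M)=(-2,2)$.
   Context: $B_n$: signed permutations of $\pm[n]=\{\pm1,\dots,\pm n\}$ ($x(-i)=-x(i)$), full notation $x_{-n},\dots,x_{-1},x_1,\dots,x_n$; Coxeter generators $S=\{s_0,\dots,s_{n-1}\}$ with $s_0=(-1\ 1)$, $s_i=(i\ i{+}1)(-i{-}1\ {-i})$. Weak order $v\le w$ iff $I(v)\subseteq I(w)$, $I(w)$ the reflections $t$ with $\ell(tw)<\ell(w)$. An element is join-irreducible if it covers exactly one element. A signed subset of $[n]$ is $A\subseteq\pm[n]$ with $\{-i,i\}\not\subseteq A$ for all $i$. Let $-A=\{a:-a\in A\}$, $\pm A=A\cup-A$, complements taken in $\pm[n]$, $m=\min A$, and $M=-m$ if $|A|=n$, otherwise $M=\max(\pm A)^c$. Join-irreducibles of $B_n$ correspond bijectively to signed subsets with $M>m$: the full notation of $\gamma$ lists the elements of $-A$ in increasing order, then those of $(\pm A)^c$ in increasing order, then those of $A$ in increasing order. $(m,M)$ denotes the open real interval. The degree $\deg(\gamma)$ is the smallest $|K|$ over $K\subseteq S$ with $\gamma$ in the subgroup generated by $K$. *)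

(* Defs.v *)
From HB Require Import structures.
From mathcomp Require Import all_boot all_order all_fingroup all_algebra.
Set Implicit Arguments. Unset Strict Implicit. Unset Printing Implicit Defensive.
Import Order.TTheory GRing.Theory Num.Theory.

(* The set +-[n] is encoded as sT n := 'I_n * bool :
   (i, false) stands for the integer i+1 and (i, true) for -(i+1). *)
Definition sT (n : nat) := ('I_n * bool)%type.

Definition sval {n} (x : sT n) : int :=
  (if x.2 then - (x.1.+1)%:Z else (x.1.+1)%:Z)%R.

Definition sneg {n} (x : sT n) : sT n := (x.1, ~~ x.2).

Section Bn.
Variable n : nat.
Local Notation T := (sT n).

Definition Bn : {set {perm T}} :=
  [set w : {perm T} | [forall x : T, w (sneg x) == sneg (w x)]].

(* Coxeter generators s_0 = (-1 1), s_i = (i i+1)(-i-1 -i) for 1 <= i <= n-1;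
   the generator with index i : 'I_n is s_i. *)
Definition ordpred (i : 'I_n) : 'I_n :=
  Ordinal (leq_ltn_trans (leq_pred i) (ltn_ord i)).

Definition gen (i : 'I_n) : {perm T} :=
  if (i : nat) == 0%N then tperm ((i, false) : T) (i, true)
  else (tperm (ordpred i, false) (i, false) * tperm (ordpred i, true) (i, true))%g.

(* Coxeter length: the least k such that w is a product of k generators
   (searched below the bound (2n)!, larger than |B_n|). *)
Definition has_word (w : {perm T}) (k : nat) : bool :=
  [exists t : k.-tuple 'I_n, (\prod_(i <- t) gen i)%g == w].

Definition len (w : {perm T}) : nat :=
  find (has_word w) (iota 0 (#|{perm T}|).+1).

Definition reflections : {set {perm T}} :=
  [set (gen i ^ w)%g | i : 'I_n, w : {perm T} in Bn].

(* I(w) = { t reflection | l(t w) < l(w) }, where t w is the composite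
   "first w, then t"; in MathComp's convention this is (w * t)%g. *)
Definition Inv (w : {perm T}) : {set {perm T}} :=
  [set t in reflections | len (w * t)%g < len w].

Definition weak_le (v w : {perm T}) : bool := Inv v \subset Inv w.
Definition weak_lt (v w : {perm T}) : bool := (v != w) && weak_le v w.

Definition covers (w v : {perm T}) : bool :=
  [&& v \in Bn, weak_lt v w &
      [forall u in Bn, ~~ (weak_lt v u && weak_lt u w)]].

Definition join_irreducible (w : {perm T}) : bool :=
  #|[set v in Bn | covers w v]| == 1%N.

Definition deg (w : {perm T}) : nat :=
  \big[minn/n]_(K : {set 'I_n} | w \in <<[set gen i | i in K]>>%g) #|K|.

(* Full notation x_{-n},...,x_{-1},x_1,...,x_n of w, with x_i = w(i). *)
Definition positions : seq T :=
  [seq (rev_ord i, true) | i <- enum 'I_n] ++ [seq (i, false) | i <- enum 'I_n].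

Definition full_notation (w : {perm T}) : seq int :=
  [seq sval (w p) | p <- positions].

Definition signed_subset (A : {set T}) : bool :=
  [forall i : 'I_n, ~~ (((i, false) \in A) && ((i, true) \in A))].

Definition intle (a b : int) : bool := (a <= b)%R.

Definition valA (A : {set T}) : seq int := [seq sval x | x <- enum A].
Definition valnegA (A : {set T}) : seq int := [seq (- sval x)%R | x <- enum A].
Definition valcompl (A : {set T}) : seq int :=
  [seq sval x | x <- [seq y <- enum [set: T] | (y \notin A) && (sneg y \notin A)]].

Definition assoc_notation (A : {set T}) : seq int :=
  sort intle (valnegA A) ++ sort intle (valcompl A) ++ sort intle (valA A).

Definition mA (A : {set T}) : int := head 0%R (sort intle (valA A)).
Definition MA (A : {set T}) : int :=
  if #|A| == n then (- mA A)%R else last 0%R (sort intle (valcompl A)).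

Definition cnt (A : {set T}) : nat :=
  #|[set x : T | (mA A < sval x)%R && (sval x < MA A)%R]|.

End Bn.

(* Main.v *)
Require Import Defs.
From mathcomp Require Import all_boot all_order all_fingroup all_algebra.
From mathcomp Require Import zify.
Notation sval := Defs.sval.
Import Order.TTheory GRing.Theory Num.Theory.

Module Part1.
Set Implicit Arguments. Unset Strict Implicit. Unset Printing Implicit Defensive.

Section S.
Variable n : nat.
Local Notation T := (sT n).
Local Open Scope ring_scope.

Lemma sval_neg (x : T) : sval (sneg x) = - sval x.
Proof. by case: x => i [] /=; rewrite /sval /= ?opprK. Qed.

Lemma snegK : involutive (@sneg n).
Proof. by case=> i b; rewrite /sneg /= negbK. Qed.

Lemma sval_inj : injective (@Defs.sval n).
Proof.
case=> i b [j c]; rewrite /sval /=.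
case: b; case: c => /= h; try lia;
  by congr (_, _); apply/val_inj => /=; lia.
Qed.

Lemma sval_bnd (x : T) : sval x != 0 /\ - n%:Z <= sval x <= n%:Z.
Proof. case: x => i b; have := ltn_ord i; rewrite /sval; case: b => /=; lia. Qed.

Lemma tpermE (x y z : T) : tperm x y z = if z == x then y else if z == y then x else z.
Proof.
case: tpermP => [->|->|/eqP/negPf-> /eqP/negPf->]; rewrite ?eqxx //.
by case: eqP.
Qed.

Definition swapv (i : nat) (v : int) : int :=
  if i == 0%N then (if v == 1 then -1 else if v == -1 then 1 else v)
  else if v == i%:Z then (i.+1)%:Z else if v == (i.+1)%:Z then i%:Z
  else if v == - i%:Z then - (i.+1)%:Z else if v == - (i.+1)%:Z then - i%:Z else v.

Lemma sval_gen (i : 'I_n) (x : T) : sval (gen i x) = swapv i (sval x).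
Proof.
rewrite /gen /swapv; case: x => j b.
have ij := ltn_ord j.
case: eqP => [i0|ni0].
  rewrite tpermE !xpair_eqE -!val_eqE /= i0 /sval.
  by case: b => /=; repeat case: eqP => /=; try lia.
rewrite permM [tperm (ordpred i, false) _ _]tpermE.
rewrite !(fun_if (tperm (ordpred i, true) (i, true))) !tpermE !xpair_eqE -!val_eqE /= /sval.
by case: b => /=; repeat (case: eqP => /=); lia.
Qed.

Lemma swapv_odd i v : swapv i (- v) = - swapv i v.
Proof. rewrite /swapv; case: eqP => i0; repeat (case: eqP => /=); lia. Qed.

Lemma BnP (w : {perm T}) : reflect (forall x, w (sneg x) = sneg (w x)) (w \in Bn n).
Proof.
rewrite inE; apply: (iffP forallP) => H x; first exact/eqP/H.
by rewrite H.
Qed.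

Lemma Bn_group_set : group_set (Bn n).
Proof.
apply/group_setP; split; first by apply/BnP => x; rewrite !perm1.
move=> u v /BnP Hu /BnP Hv; apply/BnP => x; by rewrite !permM Hu Hv.
Qed.
Canonical Bn_group := group Bn_group_set.

Lemma Bn_sval (w : {perm T}) x : w \in Bn n -> sval (w (sneg x)) = - sval (w x).
Proof. by move/BnP->; rewrite sval_neg. Qed.

Lemma gen_Bn (i : 'I_n) : gen i \in Bn n.
Proof.
apply/BnP => x; apply: sval_inj.
by rewrite sval_gen !sval_neg sval_gen swapv_odd.
Qed.

Lemma Bn_eq (u v : {perm T}) : u \in Bn n -> v \in Bn n ->
  (forall j : 'I_n, sval (u (j, false)) = sval (v (j, false))) -> u = v.
Proof.
move=> /BnP Hu /BnP Hv H; apply/permP => -[j b].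
case: b; last exact/sval_inj/H.
have -> : ((j, true) : T) = sneg (j, false) by [].
by rewrite Hu Hv; congr sneg; apply/sval_inj/H.
Qed.

End S.

End Part1.
Import Part1.

Module Part2.
Set Implicit Arguments. Unset Strict Implicit. Unset Printing Implicit Defensive.

Section S2.
Variable n : nat.
Local Notation T := (sT n).

Definition flip (a : T) := tperm a (sneg a).
Definition st (a b : T) := (tperm a b * tperm (sneg a) (sneg b))%g.
Definition G := <<[set gen i | i : 'I_n]>>%g.

Lemma sneg_inj : injective (@sneg n).
Proof. exact: inv_inj (@snegK n). Qed.

Lemma flip_Bn a : flip a \in Bn n.
Proof.
apply/BnP => x; rewrite /flip (inj_tperm _ _ _ sneg_inj) snegK.
by rewrite tpermC.
Qed.

Lemma flipJ a (w : {perm T}) : w \in Bn n -> (flip a ^ w)%g = flip (w a).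
Proof. by move/BnP=> Hw; rewrite /flip tpermJ Hw. Qed.

Lemma stJ a b (w : {perm T}) : w \in Bn n -> (st a b ^ w)%g = st (w a) (w b).
Proof. by move/BnP=> Hw; rewrite /st conjMg !tpermJ !Hw. Qed.

Lemma gen_G (i : 'I_n) : gen i \in G.
Proof. by apply: mem_gen; apply: imset_f. Qed.

Lemma G_Bn : (G \subset Bn n).
Proof. by rewrite gen_subG; apply/subsetP => _ /imsetP[i _ ->]; apply: gen_Bn. Qed.

Lemma flip_G0 (j : 'I_n) : flip (j, false) \in G.
Proof.
move: {2}(j : nat) (erefl (j : nat)) => k; elim: k j => [|k IH] j jk.
  have := gen_G j; rewrite /gen jk eqxx.
  by [].
have jk' : (k < n)%N by have := ltn_ord j; lia.
have := IH (Ordinal jk') erefl.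
move=> H; have := groupJ H (gen_G j).
rewrite flipJ ?gen_Bn //.
suff -> : gen j (Ordinal jk', false) = (j, false) by [].
apply: sval_inj; rewrite sval_gen /swapv /sval /= jk /=.
repeat (case: eqP => /=); lia.
Qed.

Lemma flip_G (a : T) : flip a \in G.
Proof.
case: a => j [] //; last exact: flip_G0.
by rewrite /flip tpermC; apply: flip_G0.
Qed.

Lemma st_G0 (i j : 'I_n) : (i < j)%N -> st (i, false) (j, false) \in G.
Proof.
move=> ij; move: {2}(j - i.+1)%N (erefl (j - i.+1)%N) => d.
elim: d j ij => [|d IH] j ij jd.
  have j0 : ((j : nat) != 0)%N by lia.
  have := gen_G j; rewrite /gen (negPf j0).
  suff -> : ordpred j = i by [].
  by apply/val_inj => /=; lia.
have jk' : (j.-1 < n)%N by have := ltn_ord j; lia.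
have ij' : (i < Ordinal jk')%N by rewrite /=; lia.
have := IH (Ordinal jk') ij' ltac:(rewrite /=; lia).
move=> H; have := groupJ H (gen_G j).
rewrite stJ ?gen_Bn //.
suff [-> ->] : gen j (i, false) = (i, false) /\ gen j (Ordinal jk', false) = (j, false) by [].
split; apply: sval_inj; rewrite sval_gen /swapv /sval /=;
  repeat (case: eqP => /=); lia.
Qed.

Lemma st_sym a b : st a b = st b a.
Proof. by rewrite /st tpermC [tperm (sneg a) _]tpermC. Qed.

Lemma st_G (a b : T) : a.1 != b.1 -> st a b \in G.
Proof.
wlog : a b / (a.1 < b.1)%N.
  move=> H ab; case: (ltngtP a.1 b.1) => h.
  - exact: H.
  - by rewrite st_sym; apply: H; rewrite // eq_sym.
  - by move: ab; rewrite -val_eqE /= h eqxx.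
case: a b => i s [j t] /= ij _.
have H0 := st_G0 ij.
have F1 : forall u, flip (u, false) (i, false) = (i, true) \/ u != i ->
  True by [].
have Hi : st (i, s) (j, false) \in G.
  case: s; last exact: H0.
  have := groupJ H0 (flip_G (i, false)); rewrite stJ ?flip_Bn //.
  rewrite /flip tpermL tpermD //; apply/eqP => -[] /(congr1 (@nat_of_ord n)); lia.
case: t; last exact: Hi.
have := groupJ Hi (flip_G (j, false)); rewrite stJ ?flip_Bn //.
rewrite /flip tpermL tpermD //; apply/eqP => -[] /(congr1 (@nat_of_ord n)); lia.
Qed.

Lemma perm1P (v : {perm T}) : (forall x, v x = x) -> v = 1%g.
Proof. by move=> H; apply/permP => x; rewrite perm1 H. Qed.

Lemma sneg_neq (x : T) : sneg x != x.
Proof. by case: x => i b; rewrite /sneg xpair_eqE /=; case: b; rewrite andbF. Qed.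

Lemma same1 (a b : T) : a.1 = b.1 -> a = b \/ a = sneg b.
Proof. by case: a b => i s [j t] /= ->; case: s; case: t; auto. Qed.

Lemma Bn_G : Bn n \subset G.
Proof.
apply/subsetP => v.
move: {2}#|[set x | v x != x]| (leqnn #|[set x | v x != x]|) => k.
elim: k v => [|k IH] v Hk vB.
  have -> : v = 1%g.
    apply/perm1P => x; apply/eqP; apply: contraT => hx.
    suff : (0 < #|[set x | v x != x]|)%N by lia.
    by apply/card_gt0P; exists x; rewrite inE.
  exact: group1.
case: (boolP [exists x, v x != x]); last first.
  move/existsPn => H; have -> : v = 1%g.
    by apply/perm1P => x; apply/eqP; move: (H x); rewrite negbK.
  exact: group1.
case/existsP => x vx.
have /BnP vBn := vB.
set y := v x.
have yx : y != x by [].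
pose u := if y == sneg x then flip x else st y x.
have uG : u \in G.
  rewrite /u; case: ifP => yn; first exact: flip_G.
  apply: st_G; apply/eqP => /same1 [] h; first by move: yx; rewrite h eqxx.
  by move: yn; rewrite h eqxx.
have uy : u y = x.
  rewrite /u; case: ifP => [/eqP ->|yn]; first by rewrite /flip tpermR.
  rewrite /st permM tpermL tpermD //.
    apply/eqP => h; have : (sneg y).1 = x.1 by rewrite h.
    case/same1 => h2; first by move: yn; rewrite -h2 snegK eqxx.
    by move: yx; rewrite -[y]snegK h2 snegK eqxx.
  exact: sneg_neq.
have ufix : forall z, v z = z -> u z = z.
  move=> z vz.
  have zx : x != z by apply/eqP => xz; move: vx; rewrite xz vz eqxx.
  have zy : y != z.
    apply/eqP => yz; move: vz; rewrite -yz /y => /perm_inj h.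
    by move: vx; rewrite h eqxx.
  have zsx : sneg x != z.
    apply/eqP => h; move: vz; rewrite -h vBn => /sneg_inj h2.
    by move: vx; rewrite h2 eqxx.
  have zsy : sneg y != z.
    apply/eqP => h; move: vz; rewrite -h vBn => /sneg_inj h2.
    move: h2; rewrite /y => /perm_inj h3.
    by move: vx; rewrite h3 eqxx.
  rewrite /u; case: ifP => _; first by rewrite /flip tpermD.
  by rewrite /st permM !tpermD.
have uB : u \in Bn n by apply: (subsetP G_Bn).
have v'B : (v * u)%g \in Bn n by apply: groupM.
have lt : (#|[set z | (v * u)%g z != z]| < #|[set z | v z != z]|)%N.
  apply: proper_card; apply/properP; split.
    apply/subsetP => z; rewrite !inE permM; apply: contra => /eqP vz.
    by rewrite vz ufix.
  exists x; first by rewrite inE.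
  by rewrite inE permM -/y uy eqxx.
have := IH (v * u)%g ltac:(lia) v'B.
move=> H; have := groupM H (groupVr uG).
by rewrite -mulgA mulgV mulg1.
Qed.
End S2.

End Part2.
Import Part2.

Module Part3.
Set Implicit Arguments. Unset Strict Implicit. Unset Printing Implicit Defensive.

Section S3.
Variable n : nat.
Local Notation T := (sT n).
Local Notation N := #|{perm T}|.

Definition W k : {set {perm T}} := [set v | [exists k' : 'I_k.+1, has_word v k']].

Lemma hw0 : has_word (1%g : {perm T}) 0.
Proof. by apply/existsP; exists [tuple]; rewrite big_nil. Qed.

Lemma hw_cons (v : {perm T}) k i : has_word v k -> has_word (gen i * v)%g k.+1.
Proof.
case/existsP => t /eqP <-; apply/existsP; exists [tuple of i :: t].
by rewrite big_cons.
Qed.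

Lemma W1 k : (1%g : {perm T}) \in W k.
Proof. by rewrite inE; apply/existsP; exists ord0; apply: hw0. Qed.

Lemma W_le k l : (k <= l)%N -> W k \subset W l.
Proof.
move=> kl; apply/subsetP => v; rewrite !inE => /existsP[k' h].
apply/existsP; exists (widen_ord (leq_ltn_trans kl (ltnSn l)) k'); exact: h.
Qed.

Lemma W_cons k v i : v \in W k -> (gen i * v)%g \in W k.+1.
Proof.
rewrite !inE => /existsP[k' h]; apply/existsP; exists (lift ord0 k').
by rewrite lift0; apply: hw_cons.
Qed.

Lemma W_stab : exists2 k, (k <= N)%N & W k.+1 \subset W k.
Proof.
case: (boolP [exists k : 'I_N.+1, W k.+1 \subset W k]).
  by case/existsP => k h; exists k => //; rewrite -ltnS.
move/existsPn => H.
suff : forall k, (k <= N.+1)%N -> (k < #|W k|)%N.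
  move/(_ N.+1 (leqnn _)); rewrite ltnNge.
  by rewrite (leq_trans (max_card _)) ?leqnSn.
elim=> [|k IH] kN; first by apply/card_gt0P; exists 1%g; apply: W1.
apply: (leq_ltn_trans (IH (ltnW kN))); apply: proper_card.
rewrite properE W_le ?leqnSn //=.
by have := H (Ordinal kN).
Qed.

Lemma G_W : G n \subset W N.
Proof.
have [k kN stab] := W_stab.
apply: (subset_trans _ (W_le kN)).
apply/subsetP => v /gen_prodgP [L [c Hc ->]].
elim: L c Hc => [|L IH] c Hc; first by rewrite big_ord0 W1.
rewrite big_ord_recl.
have /imsetP[i _ ->] := Hc ord0.
apply: (subsetP stab); apply: W_cons; apply: IH => j; exact: Hc.
Qed.

Lemma Bn_W v : v \in Bn n -> exists2 k, (k <= N)%N & has_word v k.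
Proof.
move=> vB; have := subsetP G_W v (subsetP (Bn_G n) v vB).
rewrite inE => /existsP[k h]; exists k => //; rewrite -ltnS; exact: ltn_ord.
Qed.

Lemma len_spec (v : {perm T}) k : has_word v k -> (k <= N)%N ->
  (len v <= k)%N /\ has_word v (len v).
Proof.
move=> h kN; rewrite /len.
have hk : has (has_word v) (iota 0 N.+1).
  by apply/hasP; exists k => //; rewrite mem_iota /= add0n ltnS.
have lt := hk; rewrite has_find size_iota in lt.
split.
  rewrite leqNgt; apply/negP => H.
  have := before_find 0 H; rewrite nth_iota ?add0n ?h //.
have := nth_find 0 hk; rewrite nth_iota ?add0n //.
Qed.

Lemma len1 : len (1%g : {perm T}) = 0%N.
Proof.
have [h _] := len_spec hw0 (leq0n _); lia.
Qed.

Lemma swapvK i v : swapv i (swapv i v) = v.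
Proof. rewrite /swapv; case: eqP => i0; repeat (case: eqP => /=); lia. Qed.

Lemma gen_invol (i : 'I_n) : (gen i * gen i)%g = 1%g.
Proof.
apply/perm1P => x; apply: sval_inj; by rewrite permM !sval_gen swapvK.
Qed.

Lemma Inv_nonempty v : v \in Bn n -> v != 1%g -> exists t, t \in Inv v.
Proof.
move=> vB v1.
have [k kN hk] := Bn_W vB.
have [lek hl] := len_spec hk kN.
move: hl; case E: (len v) => [|k'].
  case/existsP => t /eqP; rewrite tuple0 big_nil => h.
  by move: v1; rewrite -h eqxx.
case/existsP => t /eqP.
rewrite [t]tuple_eta /= big_cons => vE.
set r := (\prod_(j <- behead t) gen j)%g in vE.
have hr : has_word r k'.
  by apply/existsP; exists [tuple of behead t].
exists (gen (thead t) ^ v)%g.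
rewrite inE; apply/andP; split.
  by apply/imset2P; exists (thead t) v.
have -> : (v * gen (thead t) ^ v)%g = r.
  by rewrite /conjg mulgA mulgV mul1g -vE mulgA gen_invol mul1g.
have [h1 _] := len_spec hr ltac:(lia).
lia.
Qed.

Lemma not_ji1 : ~~ join_irreducible (1%g : {perm T}).
Proof.
rewrite /join_irreducible.
suff -> : [set v in Bn n | covers 1%g v] = set0 by rewrite cards0.
apply/setP => v; rewrite in_set0 inE; apply/negP => /andP[vB].
case/and3P => _ /andP[v1 le] _.
have [t tI] := Inv_nonempty vB v1.
move: (subsetP le t tI); rewrite inE len1; case/andP => _.
by rewrite ltn0.
Qed.

End S3.

End Part3.
Import Part3.

Module Part4.
Set Implicit Arguments. Unset Strict Implicit. Unset Printing Implicit Defensive.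

Lemma strict_sorted (s : seq int) : sorted intle s -> uniq s ->
  forall i, (i.+1 < size s)%N -> (nth 0%R s i < nth 0%R s i.+1)%R.
Proof.
move=> /(sortedP 0%R) so us i hi.
have := so i hi; rewrite /intle => le.
have : nth 0%R s i != nth 0%R s i.+1 by rewrite nth_uniq // ?(ltnW hi); lia.
by move=> ne; rewrite lt_neqAle ne le.
Qed.

Lemma intle_total : total intle.
Proof. by move=> x y; rewrite /intle le_total. Qed.

Lemma size_enum_ordX n : size (enum_mem (mem (PredOfSimpl.coerce (pred_of_argType 'I_n)))) = n.
Proof. by rewrite -cardE card_ord. Qed.

Section S4.
Variable n : nat.
Local Notation T := (sT n).
Variable g : {perm T}.
Variable A : {set T}.
Hypothesis gB : g \in Bn n.
Hypothesis hnot : full_notation g = assoc_notation A.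

Local Notation L := (full_notation g).
Local Notation S1 := (sort intle (valnegA A)).
Local Notation S2 := (sort intle (valcompl A)).
Local Notation S3 := (sort intle (valA A)).
Local Notation a := #|A|.

Definition f j := nth 0%R L (n + j).

Lemma size_pos : size (positions n) = (n + n)%N.
Proof. by rewrite /positions size_cat !size_map -enumT size_enum_ord. Qed.

Lemma nth_pos_false (j : 'I_n) : nth (j, false) (positions n) (n + j) = (j, false).
Proof.
rewrite /positions nth_cat size_map size_enum_ord ltnNge leq_addr /= addKn.
by rewrite (nth_map j) ?size_enum_ord // nth_ord_enum.
Qed.

Lemma nth_pos_true (j : 'I_n) : nth (j, false) (positions n) j = (rev_ord j, true).
Proof.
rewrite /positions nth_cat size_map size_enum_ord ltn_ord.
by rewrite (nth_map j) ?size_enum_ord // nth_ord_enum.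
Qed.

Lemma F0 (j : 'I_n) : sval (g (j, false)) = f j.
Proof.
rewrite /f /full_notation (nth_map (j, false)); first by rewrite nth_pos_false.
by rewrite size_pos ltn_add2l.
Qed.

Lemma L_true (j : 'I_n) : nth 0%R L j = sval (g (rev_ord j, true)).
Proof.
rewrite /full_notation (nth_map (j, false)); first by rewrite nth_pos_true.
by rewrite size_pos (leq_trans (ltn_ord j)) // leq_addr.
Qed.

Lemma size_S1 : size S1 = a.
Proof. by rewrite size_sort size_map cardE. Qed.
Lemma size_S3 : size S3 = a.
Proof. by rewrite size_sort size_map cardE. Qed.

Lemma size_L : size L = (n + n)%N.
Proof. by rewrite size_map size_pos. Qed.

Lemma sizes : (a + size S2 + a = n + n)%N.
Proof.
have := size_L; rewrite hnot /assoc_notation !size_cat size_S1 size_S3.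
lia.
Qed.

Lemma a_le : (a <= n)%N.
Proof. have := sizes; lia. Qed.

Lemma nthL k : nth 0%R L k =
  if (k < a)%N then nth 0%R S1 k else if (k < a + size S2)%N then nth 0%R S2 (k - a)
  else nth 0%R S3 (k - a - size S2).
Proof.
rewrite hnot /assoc_notation nth_cat size_S1; case: ifP => // h.
rewrite nth_cat.
by have -> : (k - a < size S2)%N = (k < a + size S2)%N by lia.
Qed.

Lemma uniq_S2 : uniq S2.
Proof.
rewrite sort_uniq /valcompl map_inj_uniq; last by move=> x y /sval_inj.
by apply: filter_uniq; apply: enum_uniq.
Qed.

Lemma uniq_S3 : uniq S3.
Proof. by rewrite sort_uniq /valA map_inj_uniq ?enum_uniq //; move=> x y /sval_inj. Qed.

Lemma strict2 i : (i.+1 < size S2)%N -> (nth 0%R S2 i < nth 0%R S2 i.+1)%R.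
Proof. apply: strict_sorted; [apply: sort_sorted; exact: intle_total | exact: uniq_S2]. Qed.
Lemma strict3 i : (i.+1 < size S3)%N -> (nth 0%R S3 i < nth 0%R S3 i.+1)%R.
Proof. apply: strict_sorted; [apply: sort_sorted; exact: intle_total | exact: uniq_S3]. Qed.

Lemma F1 j : (j.+1 < n - a)%N -> (f j < f j.+1)%R.
Proof.
move=> h; have sz := sizes; rewrite /f !nthL.
have -> : (n + j < a)%N = false by lia.
have -> : (n + j.+1 < a)%N = false by lia.
have -> : (n + j < a + size S2)%N = true by lia.
have -> : (n + j.+1 < a + size S2)%N = true by lia.
have -> : (n + j.+1 - a = (n + j - a).+1)%N by lia.
apply: strict2; lia.
Qed.

Lemma F2 j : (n - a <= j)%N -> (j.+1 < n)%N -> (f j < f j.+1)%R.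
Proof.
move=> h1 h2; have sz := sizes; rewrite /f !nthL.
have -> : (n + j < a)%N = false by lia.
have -> : (n + j.+1 < a)%N = false by lia.
have -> : (n + j < a + size S2)%N = false by lia.
have -> : (n + j.+1 < a + size S2)%N = false by lia.
have -> : (n + j.+1 - a - size S2 = (n + j - a - size S2).+1)%N by lia.
apply: strict3; rewrite size_S3; lia.
Qed.

Lemma F3 : (0 < a)%N -> f (n - a) = mA A.
Proof.
move=> h; have sz := sizes; rewrite /f nthL.
have -> : (n + (n - a) < a)%N = false by lia.
have -> : (n + (n - a) < a + size S2)%N = false by lia.
have -> : (n + (n - a) - a - size S2 = 0)%N by lia.
by rewrite /mA nth0.
Qed.

Lemma F4 : (a < n)%N -> f (n - a - 1) = MA A.
Proof.
move=> h; have sz := sizes.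
have -> : MA A = last 0%R S2.
  rewrite /MA ifF //; apply/negbTE; rewrite neq_ltn h //.
rewrite /f nthL.
have -> : (n + (n - a - 1) < a)%N = false by lia.
have -> : (n + (n - a - 1) < a + size S2)%N = true by lia.
rewrite -nth_last -subn1 (_ : size _ = size S2) //; congr nth; lia.
Qed.

Lemma F5 : (a < n)%N -> (0 < f 0)%R.
Proof.
move=> h; have sz := sizes.
have n0 : (0 < n)%N by lia.
have n1 : ((n - 1) < n)%N by lia.
have := L_true (Ordinal n1).
have -> : rev_ord (Ordinal n1) = Ordinal n0 by apply/val_inj => /=; lia.
have -> : ((Ordinal n0, true) : T) = sneg (Ordinal n0, false) by [].
rewrite Bn_sval // F0 /= nthL.
have -> : ((n - 1) < a)%N = false by lia.
have -> : ((n - 1) < a + size S2)%N = true by lia.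
move=> e1.
have e2 : f 0 = nth 0%R S2 ((n - 1) - a).+1.
  rewrite /f nthL.
  have -> : (n + 0 < a)%N = false by lia.
  have -> : (n + 0 < a + size S2)%N = true by lia.
  congr nth; lia.
have := strict2 (i := ((n - 1) - a)%N) ltac:(lia).
rewrite e1 -e2 => H.
have : (- f 0 < f 0)%R by [].
lia.
Qed.

End S4.

End Part4.
Import Part4.

Module Part5.
Unset Implicit Arguments. Unset Printing Implicit Defensive.
Local Open Scope ring_scope.

Definition F1a (k j : nat) : int :=
  if j == k.-1 then (k.+1)%:Z else if j == k then k%:Z else (j.+1)%:Z.
Definition F1b (j : nat) : int := if j == 0%N then -1 else (j.+1)%:Z.
Definition F2ai (k j : nat) : int :=
  if j == k.-1 then (k.+1)%:Z else if j == k then (k.+2)%:Z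
  else if j == k.+1 then k%:Z else (j.+1)%:Z.
Definition F2aii (k j : nat) : int :=
  if j == k.-1 then (k.+2)%:Z else if j == k then k%:Z
  else if j == k.+1 then (k.+1)%:Z else (j.+1)%:Z.
Definition F2b (j : nat) : int := if j == 0%N then 2 else if j == 1%N then -1 else (j.+1)%:Z.
Definition F2c (j : nat) : int := if j == 0%N then 1 else if j == 1%N then -2 else (j.+1)%:Z.
Definition F2d1 (j : nat) : int := if j == 0%N then -2 else if j == 1%N then -1 else (j.+1)%:Z.
Definition F2d2 (j : nat) : int := if j == 0%N then -2 else if j == 1%N then 1 else (j.+1)%:Z.

Record PH (n a : nat) (m M : int) (f : nat -> int) : Prop := {
  PHa : (a <= n)%N;
  PH1 : forall j, (j.+1 < n - a)%N -> f j < f j.+1;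
  PH2 : forall j, (n - a <= j)%N -> (j.+1 < n)%N -> f j < f j.+1;
  PH3 : (0 < a)%N -> f (n - a)%N = m;
  PH4 : (a < n)%N -> f (n - a - 1)%N = M;
  PH5 : (a < n)%N -> 0 < f 0%N;
  PH6 : a = n -> M = - m;
  PHb : forall j, (j < n)%N -> f j != 0 /\ - (n%:Z) <= f j <= n%:Z;
  PHc : forall i j, (i < n)%N -> (j < n)%N -> (i != j)%N -> f i != f j /\ f i != - f j;
  PHid : ~ (forall j, (j < n)%N -> f j = (j.+1)%:Z) }.

Section Pure.
Variables (n a : nat) (m M : int) (f : nat -> int).
Hypothesis HH : PH n a m M f.
Lemma Ha : (a <= n)%N.
Proof. by case: HH. Qed.
Lemma H1 : forall j, (j.+1 < n - a)%N -> f j < f j.+1.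
Proof. by case: HH. Qed.
Lemma H2 : forall j, (n - a <= j)%N -> (j.+1 < n)%N -> f j < f j.+1.
Proof. by case: HH. Qed.
Lemma H3 : (0 < a)%N -> f (n - a)%N = m.
Proof. by case: HH. Qed.
Lemma H4 : (a < n)%N -> f (n - a - 1)%N = M.
Proof. by case: HH. Qed.
Lemma H5 : (a < n)%N -> 0 < f 0%N.
Proof. by case: HH. Qed.
Lemma H6 : a = n -> M = - m.
Proof. by case: HH. Qed.
Lemma Hb : forall j, (j < n)%N -> f j != 0 /\ - (n%:Z) <= f j <= n%:Z.
Proof. by case: HH. Qed.
Lemma Hc : forall i j, (i < n)%N -> (j < n)%N -> (i != j)%N -> f i != f j /\ f i != - f j.
Proof. by case: HH. Qed.
Lemma Hid : ~ (forall j, (j < n)%N -> f j = (j.+1)%:Z).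
Proof. by case: HH. Qed.

Lemma seg1' i d : (i + d < n - a)%N -> f i + d%:Z <= f (i + d)%N.
Proof.
have Hax := Ha.
elim: d => [|d IH] h; first by rewrite addn0; lia.
have := IH ltac:(lia); have := H1 (i + d)%N ltac:(lia).
rewrite addnS; lia.
Qed.

Lemma seg1 i k : (i <= k)%N -> (k < n - a)%N -> f i + (k - i)%N%:Z <= f k.
Proof. have Hax := Ha. by move=> ik hk; have := seg1' i (k - i); rewrite subnKC //; apply. Qed.

Lemma seg2' i d : (n - a <= i)%N -> (i + d < n)%N -> f i + d%:Z <= f (i + d)%N.
Proof.
have Hax := Ha.
move=> hi; elim: d => [|d IH] h; first by rewrite addn0; lia.
have := IH ltac:(lia); have := H2 (i + d)%N ltac:(lia) ltac:(lia).
rewrite addnS; lia.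
Qed.

Lemma seg2 i k : (n - a <= i)%N -> (i <= k)%N -> (k < n)%N -> f i + (k - i)%N%:Z <= f k.
Proof. have Hax := Ha. by move=> hi ik hk; have := seg2' i (k - i) hi; rewrite subnKC //; apply. Qed.

Lemma inc_id : (forall j, (j.+1 < n)%N -> f j < f j.+1) -> ((0 < n)%N -> 0 < f 0%N) ->
  forall j, (j < n)%N -> f j = (j.+1)%:Z.
Proof.
have Hax := Ha.
move=> inc h0.
have seg : forall i d, (i + d < n)%N -> f i + d%:Z <= f (i + d)%N.
  move=> i; elim=> [|d IH] h; first by rewrite addn0; lia.
  have := IH ltac:(lia); have := inc (i + d)%N ltac:(lia); rewrite addnS; lia.
move=> j hj.
have := seg 0%N j ltac:(lia); have := seg j (n - 1 - j)%N ltac:(lia).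
rewrite add0n (_ : (j + (n - 1 - j))%N = (n - 1)%N); last lia.
have := h0 ltac:(lia); have := Hb (n - 1)%N ltac:(lia).
lia.
Qed.

Lemma nondeg : (0 < a)%N /\ m < M.
Proof.
have Hax := Ha.
have a0 : (0 < a)%N.
  case: (posnP a) => // a0; exfalso; apply: Hid; apply: inc_id.
    move=> j hj; apply: H1; lia.
  by move=> n0; apply: H5; lia.
split => //.
case: (ltngtP a n) => an; last first.
- have := H6 an; have := H3 a0; rewrite an subnn => e1 e2.
  case: (ltrP 0 m) => m0.
    exfalso; apply: Hid; apply: inc_id; last by rewrite e1.
    move=> j hj; apply: H2; lia.
  have := Hb 0%N ltac:(lia); rewrite e1; lia.
- lia.
- have e1 := H3 a0; have e2 := H4 an.
  have := Hc (n - a - 1)%N (n - a)%N ltac:(lia) ltac:(lia) ltac:(lia).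
  rewrite e1 e2 => -[ne _].
  case: (ltrP M m) => Mm; last lia.
  exfalso; apply: Hid; apply: inc_id; last by move=> _; apply: H5.
  move=> j hj.
  case: (ltngtP j.+1 (n - a)) => h.
  + exact: H1.
  + apply: H2; lia.
  + have -> : j = (n - a - 1)%N by lia.
    by rewrite (_ : (n - a - 1).+1 = n - a)%N ?e1 ?e2 //; lia.
Qed.

Lemma bounds : [/\ m != 0, - (n%:Z) <= m, m <= n%:Z, 0 < M & M <= n%:Z].
Proof.
have Hax := Ha.
have [a0 mM] := nondeg.
have e1 := H3 a0.
have := Hb (n - a)%N; rewrite e1 => hb.
case: (ltngtP a n) => an.
- have e2 := H4 an.
  have := Hb (n - a - 1)%N; rewrite e2 => hb2.
  have := H5 an; have := seg1 0 (n - a - 1)%N; rewrite e2 subn0.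
  by split; lia.
- lia.
- by have := H6 an; split; lia.
Qed.

Definition necw (i : nat) := exists j, (j < n)%N /\  (((i <= j)%N != (i%:Z < f j)) || (i%:Z < - f j)).

Lemma nec_pos i : 0 < m -> m <= i%:Z -> i%:Z < M -> (i < n)%N -> necw i.
Proof.
have Hax := Ha.
move=> m0 mi iM hi.
have [a0 mM] := nondeg.
have an : (a < n)%N.
  case: (ltngtP a n) => an //; [lia | have := H6 an; lia].
have e1 := H3 a0; have e2 := H4 an.
case: (leqP i (n - a)) => ip.
  exists (n - a)%N; split; first lia.
  rewrite e1 ip; have -> : (i%:Z < m) = false by lia.
  by [].
exists (n - a - 1)%N; split; first lia.
rewrite e2.
have -> : (i <= n - a - 1)%N = false by lia.
by have -> : (i%:Z < M) = true by lia.
Qed.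

Lemma nec_neg i : m < 0 -> (i%:Z < - m \/ i%:Z < M) -> (i < n)%N -> necw i.
Proof.
have Hax := Ha.
move=> m0 h hi.
have [a0 mM] := nondeg.
have e1 := H3 a0.
case: (ltrP (i%:Z) (- m)) => him.
  exists (n - a)%N; split; first lia.
  rewrite e1; apply/orP; right; apply/idP; lia.
have an : (a < n)%N.
  case: (ltngtP a n) => an //; [lia | have := H6 an; lia].
have e2 := H4 an.
case: (leqP i (n - a)) => ip.
  exists (n - a)%N; split; first lia.
  rewrite e1 ip; have -> : (i%:Z < m) = false by lia.
  by [].
exists (n - a - 1)%N; split; first lia.
rewrite e2.
have -> : (i <= n - a - 1)%N = false by lia.
by have -> : (i%:Z < M) = true by lia.
Qed.

Lemma head_id h : (h <= n - a)%N -> (a < n)%N -> ((0 < h)%N -> f (h - 1)%N <= h%:Z) ->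
  forall j, (j < h)%N -> f j = (j.+1)%:Z.
Proof.
have Hax := Ha.
move=> hp an hh j hj.
have := seg1 0 j ltac:(lia) ltac:(lia); have := seg1 j (h - 1)%N ltac:(lia) ltac:(lia).
have := H5 an; have := hh ltac:(lia).
rewrite subn0; lia.
Qed.

Lemma tail_id t : (n - a <= t)%N -> ((t < n)%N -> (t.+1)%:Z <= f t) ->
  forall j, (t <= j)%N -> (j < n)%N -> f j = (j.+1)%:Z.
Proof.
have Hax := Ha.
move=> tp ht j tj hj.
have := seg2 t j ltac:(lia) ltac:(lia) ltac:(lia).
have := seg2 j (n - 1)%N ltac:(lia) ltac:(lia) ltac:(lia).
have := Hb (n - 1)%N ltac:(lia); have := ht ltac:(lia).
lia.
Qed.


Lemma f1a k : m = k%:Z -> M = (k.+1)%:Z -> forall j, (j < n)%N -> f j = F1a k j.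
Proof.
have Hax := Ha.
move=> em eM.
have [a0 mM] := nondeg; have [m0 mlo mhi M0 Mhi] := bounds.
have an : (a < n)%N by case: (ltngtP a n) => an //; [lia | have := H6 an; lia].
have e1 := H3 a0; have e2 := H4 an; have f0 := H5 an.
have B1 : (2 <= n - a)%N -> f (n - a - 1 - 1) <= (k.-1)%:Z.
  move=> h2.
  have A1 := seg1 (n - a - 1 - 1) (n - a - 1) ltac:(lia) ltac:(lia).
  have [A2 _] := Hc (n - a - 1 - 1) (n - a) ltac:(lia) ltac:(lia) ltac:(lia).
  move: A1 A2; rewrite e1 e2 em; lia.
have B2 : ((n - a).+1 < n)%N -> ((k.+2)%:Z <= f (n - a).+1).
  move=> h2.
  have A4 := seg2 (n - a) (n - a).+1 ltac:(lia) ltac:(lia) ltac:(lia).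
  have [A5 _] := Hc (n - a).+1 (n - a - 1) ltac:(lia) ltac:(lia) ltac:(lia).
  move: A4 A5; rewrite e1 e2 em eM; lia.
have ep : (n - a)%N = k.
  apply/eqP; rewrite eqn_leq; apply/andP; split.
    case: (leqP 2 (n - a)) => h2; last lia.
    have := B1 h2; have A3 := seg1 0 (n - a - 1 - 1) ltac:(lia) ltac:(lia).
    move: A3; rewrite subn0; lia.
  case: (ltnP (n - a).+1 n) => h2; last lia.
  have := B2 h2; have A6 := seg2 (n - a).+1 (n - 1) ltac:(lia) ltac:(lia) ltac:(lia).
  have [_ A7] := Hb (n - 1)%N ltac:(lia).
  lia.
move=> j hj; rewrite /F1a.
case: eqP => [ej|nj1].
  by rewrite (_ : j = n - a - 1)%N ?e2 ?eM //; lia.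
case: eqP => [ej|nj2].
  by rewrite (_ : j = n - a)%N ?e1 ?em //; lia.
case: (ltnP j k) => jk.
  have hh : (0 < n - a - 1)%N -> f (n - a - 1 - 1) <= (n - a - 1)%N%:Z.
    by move=> _; have := B1 ltac:(lia); lia.
  exact: (head_id (n - a - 1) ltac:(lia) an hh j ltac:(lia)).
have ht : ((n - a).+1 < n)%N -> ((n - a).+2)%:Z <= f (n - a).+1.
  by move=> h; have := B2 h; lia.
exact: (tail_id (n - a).+1 ltac:(lia) ht j ltac:(lia) hj).
Qed.

Lemma f1b : m = -1 -> M = 1 -> forall j, (j < n)%N -> f j = F1b j.
Proof.
have Hax := Ha.
move=> em eM.
have [a0 mM] := nondeg; have [m0 mlo mhi M0 Mhi] := bounds.
have an : a = n.
  case: (ltngtP a n) => an //; last lia.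
  have e1 := H3 a0; have e2 := H4 an.
  have [_ A] := Hc (n - a - 1) (n - a) ltac:(lia) ltac:(lia) ltac:(lia).
  move: A; rewrite e1 e2 em eM; lia.
have e1 : f 0%N = -1 by have := H3 a0; rewrite an subnn em.
have ht : (1 < n)%N -> (2%:Z <= f 1%N).
  move=> h.
  have := seg2 0 1 ltac:(lia) ltac:(lia) ltac:(lia).
  have [B1 _] := Hb 1%N h.
  have [C1 C2] := Hc 1 0 h ltac:(lia) ltac:(lia).
  move: C1 C2; rewrite e1; lia.
move=> j hj; rewrite /F1b; case: eqP => [->|nj] //.
exact: (tail_id 1 ltac:(lia) ht j ltac:(lia) hj).
Qed.

Lemma f2a k : m = k%:Z -> M = (k.+2)%:Z ->
  (forall j, (j < n)%N -> f j = F2ai k j) \/ (forall j, (j < n)%N -> f j = F2aii k j).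
Proof.
have Hax := Ha.
move=> em eM.
have [a0 mM] := nondeg; have [m0 mlo mhi M0 Mhi] := bounds.
have an : (a < n)%N by case: (ltngtP a n) => an //; [lia | have := H6 an; lia].
have e1 := H3 a0; have e2 := H4 an; have f0 := H5 an.
have C1 : (2 <= n - a)%N -> f (n - a - 1 - 1) <= (k.-1)%:Z \/ f (n - a - 1 - 1) = (k.+1)%:Z.
  move=> h2.
  have A1 := seg1 (n - a - 1 - 1) (n - a - 1) ltac:(lia) ltac:(lia).
  have [A2 _] := Hc (n - a - 1 - 1) (n - a) ltac:(lia) ltac:(lia) ltac:(lia).
  move: A1 A2; rewrite e1 e2 em; lia.
have C2 : ((n - a).+1 < n)%N -> f (n - a).+1 = (k.+1)%:Z \/ (k.+3)%:Z <= f (n - a).+1.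
  move=> h2.
  have A4 := seg2 (n - a) (n - a).+1 ltac:(lia) ltac:(lia) ltac:(lia).
  have [A5 _] := Hc (n - a).+1 (n - a - 1) ltac:(lia) ltac:(lia) ltac:(lia).
  move: A4 A5; rewrite e1 e2 em eM; lia.
case: (boolP ((2 <= n - a)%N && (f (n - a - 1 - 1) == (k.+1)%:Z))) => X.
- left.
  have [h2 /eqP fx] := andP X.
  have C3 : (3 <= n - a)%N -> f (n - a - 1 - 1 - 1) <= (k.-1)%:Z.
    move=> h3.
    have A1 := seg1 (n - a - 1 - 1 - 1) (n - a - 1 - 1) ltac:(lia) ltac:(lia).
    have [A2 _] := Hc (n - a - 1 - 1 - 1) (n - a) ltac:(lia) ltac:(lia) ltac:(lia).
    move: A1 A2; rewrite e1 fx em; lia.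
  have C4 : ((n - a).+1 < n)%N -> (k.+3)%:Z <= f (n - a).+1.
    move=> h.
    have [A5 _] := Hc (n - a).+1 (n - a - 1 - 1) h ltac:(lia) ltac:(lia).
    move: A5 (C2 h); rewrite fx; lia.
  have ep : (n - a)%N = k.+1.
    apply/eqP; rewrite eqn_leq; apply/andP; split.
      case: (leqP 3 (n - a)) => h3; last lia.
      have := C3 h3; have A3 := seg1 0 (n - a - 1 - 1 - 1) ltac:(lia) ltac:(lia).
      move: A3; rewrite subn0; lia.
    case: (ltnP (n - a).+1 n) => h2'; last lia.
    have := C4 h2'; have A6 := seg2 (n - a).+1 (n - 1) ltac:(lia) ltac:(lia) ltac:(lia).
    have [_ A7] := Hb (n - 1)%N ltac:(lia).
    lia.
  move=> j hj; rewrite /F2ai.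
  case: eqP => [ej|nj1].
    by rewrite (_ : j = n - a - 1 - 1)%N ?fx //; lia.
  case: eqP => [ej|nj2].
    by rewrite (_ : j = n - a - 1)%N ?e2 ?eM //; lia.
  case: eqP => [ej|nj3].
    by rewrite (_ : j = n - a)%N ?e1 ?em //; lia.
  case: (ltnP j k) => jk.
    have hh : (0 < n - a - 1 - 1)%N -> f (n - a - 1 - 1 - 1) <= (n - a - 1 - 1)%N%:Z.
      by move=> _; have := C3 ltac:(lia); lia.
    exact: (head_id (n - a - 1 - 1) ltac:(lia) an hh j ltac:(lia)).
  have ht : ((n - a).+1 < n)%N -> ((n - a).+2)%:Z <= f (n - a).+1.
    by move=> h; have := C4 h; lia.
  exact: (tail_id (n - a).+1 ltac:(lia) ht j ltac:(lia) hj).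
- right.
  have D1 : (2 <= n - a)%N -> f (n - a - 1 - 1) <= (k.-1)%:Z.
    move=> h2; case: (C1 h2) => // fx; move: X; rewrite h2 fx eqxx; done.
  have ep1 : (n - a <= k)%N.
    case: (leqP 2 (n - a)) => h2; last lia.
    have := D1 h2; have A3 := seg1 0 (n - a - 1 - 1) ltac:(lia) ltac:(lia).
    move: A3; rewrite subn0; lia.
  have D2 : ((n - a).+1 < n)%N /\ f (n - a).+1 = (k.+1)%:Z.
    case: (ltnP (n - a).+1 n) => h2; last lia.
    split => //; case: (C2 h2) => // hf.
    have A6 := seg2 (n - a).+1 (n - 1) ltac:(lia) ltac:(lia) ltac:(lia).
    have [_ A7] := Hb (n - 1)%N ltac:(lia).
    lia.
  have [h1 fx] := D2.
  have D3 : ((n - a).+2 < n)%N -> (k.+3)%:Z <= f (n - a).+2.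
    move=> h.
    have A4 := seg2 (n - a).+1 (n - a).+2 ltac:(lia) ltac:(lia) ltac:(lia).
    have [A5 _] := Hc (n - a).+2 (n - a - 1) ltac:(lia) ltac:(lia) ltac:(lia).
    move: A4 A5; rewrite fx e2 eM; lia.
  have ep : (n - a)%N = k.
    apply/eqP; rewrite eqn_leq ep1 /=.
    case: (ltnP (n - a).+2 n) => h2'; last lia.
    have := D3 h2'; have A6 := seg2 (n - a).+2 (n - 1) ltac:(lia) ltac:(lia) ltac:(lia).
    have [_ A7] := Hb (n - 1)%N ltac:(lia).
    lia.
  move=> j hj; rewrite /F2aii.
  case: eqP => [ej|nj1].
    by rewrite (_ : j = n - a - 1)%N ?e2 ?eM //; lia.
  case: eqP => [ej|nj2].
    by rewrite (_ : j = n - a)%N ?e1 ?em //; lia.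
  case: eqP => [ej|nj3].
    by rewrite (_ : j = (n - a).+1)%N ?fx //; lia.
  case: (ltnP j k) => jk.
    have hh : (0 < n - a - 1)%N -> f (n - a - 1 - 1) <= (n - a - 1)%N%:Z.
      by move=> _; have := D1 ltac:(lia); lia.
    exact: (head_id (n - a - 1) ltac:(lia) an hh j ltac:(lia)).
  have ht : ((n - a).+2 < n)%N -> ((n - a).+3)%:Z <= f (n - a).+2.
    by move=> h; have := D3 h; lia.
  exact: (tail_id (n - a).+2 ltac:(lia) ht j ltac:(lia) hj).
Qed.

Lemma f2bc (u w : int) : m = u -> M = w -> ((u = -1 /\ w = 2) \/ (u = -2 /\ w = 1)) ->
  [/\ (2 <= n)%N, f 0%N = w, f 1%N = u & forall j, (2 <= j)%N -> (j < n)%N -> f j = (j.+1)%:Z].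
Proof.
have Hax := Ha.
move=> em eM huw.
have [a0 mM] := nondeg; have [m0 mlo mhi M0 Mhi] := bounds.
have an : (a < n)%N.
  case: (ltngtP a n) => an //; [lia | have := H6 an; lia].
have e1 := H3 a0; have e2 := H4 an; have f0 := H5 an.
have ep : (n - a)%N = 1%N.
  case: (leqP 2 (n - a)) => h2; last lia.
  have A1 := seg1 (n - a - 1 - 1) (n - a - 1) ltac:(lia) ltac:(lia).
  have A3 := seg1 0 (n - a - 1 - 1) ltac:(lia) ltac:(lia).
  have [A2 A2'] := Hc (n - a - 1 - 1) (n - a) ltac:(lia) ltac:(lia) ltac:(lia).
  move: A1 A2 A2' A3; rewrite e1 e2 em eM subn0; lia.
rewrite ep in e1; rewrite ep subnn in e2.
have n2 : (2 <= n)%N by lia.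
split => //; first by rewrite e2.
  by rewrite e1.
have ht : (2 < n)%N -> 3%:Z <= f 2%N.
  move=> h.
  have := seg2 1 2 ltac:(lia) ltac:(lia) ltac:(lia).
  have [B1 _] := Hb 2%N h.
  have [C1 C2] := Hc 2 1 h ltac:(lia) ltac:(lia).
  have [D1 D2] := Hc 2 0 h ltac:(lia) ltac:(lia).
  move: C1 C2 D1 D2; rewrite e1 e2 em eM; lia.
move=> j j2 hj.
exact: (tail_id 2 ltac:(lia) ht j j2 hj).
Qed.

Lemma f2d : m = -2 -> M = 2 ->
  (2 <= n)%N /\ ((forall j, (j < n)%N -> f j = F2d1 j) \/ (forall j, (j < n)%N -> f j = F2d2 j)).
Proof.
have Hax := Ha.
move=> em eM.
have [a0 mM] := nondeg; have [m0 mlo mhi M0 Mhi] := bounds.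
have an : a = n.
  case: (ltngtP a n) => an //; last lia.
  have e1 := H3 a0; have e2 := H4 an.
  have [_ A] := Hc (n - a - 1) (n - a) ltac:(lia) ltac:(lia) ltac:(lia).
  move: A; rewrite e1 e2 em eM; lia.
have e1 : f 0%N = -2 by have := H3 a0; rewrite an subnn em.
have n2 : (2 <= n)%N by lia.
have F1 : f 1%N = -1 \/ f 1%N = 1.
  have := seg2 0 1 ltac:(lia) ltac:(lia) ltac:(lia).
  have [B1 _] := Hb 1%N ltac:(lia).
  have [C1 C2] := Hc 1 0 ltac:(lia) ltac:(lia) ltac:(lia).
  have A6 := seg2 1 (n - 1) ltac:(lia) ltac:(lia) ltac:(lia).
  have [_ A7] := Hb (n - 1)%N ltac:(lia).
  move: C1 C2; rewrite e1; lia.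
have ht : (2 < n)%N -> 3%:Z <= f 2%N.
  move=> h.
  have := seg2 1 2 ltac:(lia) ltac:(lia) ltac:(lia).
  have [B1 _] := Hb 2%N h.
  have [C1 C2] := Hc 2 1 h ltac:(lia) ltac:(lia).
  have [D1 D2] := Hc 2 0 h ltac:(lia) ltac:(lia).
  move: C1 C2 D1 D2; rewrite e1; lia.
split => //.
have tl := tail_id 2 ltac:(lia) ht.
case: F1 => F1; [left|right] => j hj; rewrite /F2d1 /F2d2;
  (case: eqP => [->|nj1] //; case: eqP => [->|nj2] //; apply: tl; lia).
Qed.

End Pure.

End Part5.
Import Part5.

Module Part6.
Set Implicit Arguments. Unset Strict Implicit. Unset Printing Implicit Defensive.

Section Main.
Variable n : nat.
Local Notation T := (sT n).
Variables (g : {perm T}) (A : {set T}).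
Hypotheses (gB : g \in Bn n) (hnot : full_notation g = assoc_notation A).

Lemma sval_pos (j : 'I_n) : sval ((j, false) : T) = (Posz j.+1).
Proof. by []. Qed.
Lemma sval_negp (j : 'I_n) : sval ((j, true) : T) = (- (Posz j.+1))%R.
Proof. by []. Qed.

Lemma PHg : g != 1%g -> PH n #|A| (mA A) (MA A) (f g).
Proof.
move=> g1; split.
- exact (a_le gB hnot).
- move=> j hj; exact (F1 gB hnot hj).
- move=> j h1 h2; exact (F2 gB hnot h1 h2).
- exact (F3 gB hnot).
- exact (F4 gB hnot).
- exact (F5 gB hnot).
- by move=> an; rewrite /MA an eqxx.
- move=> j hj; rewrite -(F0 g (Ordinal hj)).
  exact: sval_bnd.
- move=> i j hi hj ij; rewrite -(F0 g (Ordinal hi)) -(F0 g (Ordinal hj)); split.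
    apply/eqP => /sval_inj /perm_inj [] h; move: ij; by rewrite h eqxx.
  have -> : (- sval (g (Ordinal hj, false)))%R = sval (g (Ordinal hj, true)).
    by rewrite -(Bn_sval _ gB).
  by apply/eqP => /sval_inj /perm_inj [].
- move=> H; apply: (negP g1); apply/eqP; apply: (Bn_eq gB (group1 _)) => j.
  by rewrite F0 H // perm1.
Qed.

Definition Q (i : nat) : {set T} := [set x | ((Posz i) < sval x)%R].

Lemma swapv_gt (i j : nat) v : j != i -> ((Posz i) < swapv j v)%R = ((Posz i) < v)%R.
Proof.
move=> ji; rewrite /swapv; case: eqP => j0;
  repeat (case: eqP => /= ?); apply/idP/idP; lia.
Qed.

Lemma gen_stab (i j : 'I_n) : j != i -> gen j \in 'N(Q i | 'P)%g.
Proof.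
move=> ji; apply/astabsP => x; rewrite /= !inE sval_gen swapv_gt //.
Qed.

Lemma nec (i : 'I_n) (K : {set 'I_n}) :
  g \in <<[set gen j | j in K]>>%g -> necw n (f g) i -> i \in K.
Proof.
move=> gK [j [hj w]]; apply/negPn/negP => iK.
have sub : (<<[set gen j | j in K]>> \subset 'N(Q i | 'P))%g.
  rewrite gen_subG; apply/subsetP => _ /imsetP[j' j'K ->]; apply: gen_stab.
  by apply: contraNneq iK => <-.
have gN := subsetP sub g gK.
case/orP: w => w.
  have := astabs_act (Ordinal hj, false) gN.
  rewrite /= !inE F0 sval_pos /=.
  move=> E; move: w; rewrite E; apply/negP; rewrite negbK; apply/eqP; apply/idP/idP; lia.
have := astabs_act (Ordinal hj, true) gN.
rewrite /= !inE sval_negp.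
have -> : ((Ordinal hj, true) : T) = sneg (Ordinal hj, false) by [].
rewrite (Bn_sval _ gB) F0 w.
lia.
Qed.

Lemma deg_ge (I : {set 'I_n}) :
  (forall K : {set 'I_n}, g \in <<[set gen i | i in K]>>%g -> I \subset K) -> (#|I| <= deg g)%N.
Proof.
move=> H; rewrite /deg; apply: (big_ind (fun x => #|I| <= x)%N).
- by apply: (leq_trans (max_card _)); rewrite card_ord.
- by move=> x y hx hy; rewrite leq_min hx hy.
- by move=> K gK; apply: subset_leq_card; apply: H.
Qed.

Lemma deg_le (K : {set 'I_n}) : g \in <<[set gen i | i in K]>>%g -> (deg g <= #|K|)%N.
Proof.
move=> gK; rewrite /deg.
have : K \in index_enum {set 'I_n} by rewrite mem_index_enum.
elim: (index_enum _) => [//|i r IH] /=; rewrite in_cons big_cons.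
case/orP => [/eqP <-|jr]; first by rewrite gK geq_minl.
case: ifP => _; last exact: IH.
exact: leq_trans (geq_minr _ _) (IH jr).
Qed.


Definition rng (m M : int) : {set T} := [set x | (m < sval x)%R && (sval x < M)%R].

Lemma cntE : cnt A = #|rng (mA A) (MA A)|.
Proof. by []. Qed.

Lemma rng0 m M : (forall v : int, (m < v)%R -> (v < M)%R -> v = 0%R) -> #|rng m M| = 0%N.
Proof.
move=> H; apply/eqP; rewrite cards_eq0; apply/eqP/setP => x; rewrite !inE.
have [h1 _] := sval_bnd x; apply/negbTE/negP => /andP[a b].
by move: h1; rewrite (H _ a b) eqxx.
Qed.

Lemma rng1 m M (x0 : T) : (m < sval x0)%R -> (sval x0 < M)%R ->
  (forall v : int, (m < v)%R -> (v < M)%R -> v != 0%R -> v = sval x0) -> #|rng m M| = 1%N.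
Proof.
move=> a b H; apply/eqP/cards1P; exists x0; apply/setP => x; rewrite !inE.
apply/idP/eqP => [/andP[c d]|->]; last by rewrite a b.
have [h1 _] := sval_bnd x; exact/sval_inj/H.
Qed.

Lemma rng_pos m M (x : T) : (m < sval x)%R -> (sval x < M)%R -> (0 < #|rng m M|)%N.
Proof. by move=> a b; apply/card_gt0P; exists x; rewrite inE a b. Qed.

Lemma rng2 m M (x1 x2 : T) : sval x1 != sval x2 -> (m < sval x1)%R -> (sval x1 < M)%R ->
  (m < sval x2)%R -> (sval x2 < M)%R -> (1 < #|rng m M|)%N.
Proof.
move=> ne a b c d; apply/card_gt1P; exists x1, x2; rewrite !inE a b c d; split => //.
by apply: contraNneq ne => ->.
Qed.

Lemma gen_in (i : 'I_n) (K : {set 'I_n}) : i \in K -> gen i \in <<[set gen j | j in K]>>%g.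
Proof. by move=> iK; apply: mem_gen; apply: imset_f. Qed.

Lemma deg_eq1 (i : 'I_n) : g = gen i -> necw n (f g) i -> deg g = 1%N.
Proof.
move=> gi w; apply/eqP; rewrite eqn_leq; apply/andP; split.
  by rewrite -(cards1 i); apply: deg_le; rewrite gi gen_in // set11.
rewrite -(cards1 i); apply: deg_ge => K gK; rewrite sub1set; exact: nec gK w.
Qed.

Lemma deg_eq2 (i1 i2 : 'I_n) : i1 != i2 -> g \in <<[set gen j | j in [set i1; i2]]>>%g ->
  necw n (f g) i1 -> necw n (f g) i2 -> deg g = 2%N.
Proof.
move=> ne gK w1 w2; apply/eqP; rewrite eqn_leq; apply/andP; split.
  by have := deg_le gK; rewrite cards2 ne.
have -> : 2%N = #|[set i1; i2]| by rewrite cards2 ne.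
apply: deg_ge => K gK'; apply/subsetP => x; rewrite !inE => /orP[] /eqP ->;
  [exact: nec gK' w1 | exact: nec gK' w2].
Qed.

Lemma deg_ge3 (i1 i2 i3 : 'I_n) : i1 != i2 -> i1 != i3 -> i2 != i3 ->
  necw n (f g) i1 -> necw n (f g) i2 -> necw n (f g) i3 -> (3 <= deg g)%N.
Proof.
move=> n12 n13 n23 w1 w2 w3.
have -> : 3%N = #|i1 |: (i2 |: [set i3])|.
  rewrite !cardsU1 cards1 !inE negb_or n12 n13 n23.
  by [].
apply: deg_ge => K gK'; apply/subsetP => x; rewrite !inE => /or3P[] /eqP ->;
  [exact: nec gK' w1 | exact: nec gK' w2 | exact: nec gK' w3].
Qed.

End Main.

End Part6.
Import Part6.

Module Part7.
Set Implicit Arguments. Unset Strict Implicit. Unset Printing Implicit Defensive.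

Section Final.
Variable n : nat.
Local Notation T := (sT n).
Variables (g : {perm T}) (A : {set T}).
Hypotheses (gB : g \in Bn n) (hnot : full_notation g = assoc_notation A).

Lemma g_eq (h : {perm T}) (F : nat -> int) : h \in Bn n ->
  (forall j, (j < n)%N -> f g j = F j) -> (forall j : 'I_n, sval (h (j, false)) = F j) -> g = h.
Proof.
move=> hB Hf Hh; apply: (Bn_eq gB hB) => j.
by rewrite F0 Hh Hf.
Qed.

Lemma genB (i : 'I_n) : gen i \in Bn n. Proof. exact: gen_Bn. Qed.

Let goal := (deg g = 1%N <-> cnt A = 0%N) /\
  (deg g = 2%N <-> (cnt A = 1%N \/ (mA A = (-2)%R /\ MA A = 2%R))).

Lemma fin1 : deg g = 1%N -> cnt A = 0%N -> ~ (mA A = (-2)%R /\ MA A = 2%R) -> goal.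
Proof. move=> d c nm; rewrite /goal d c; split => //; split => // -[] //. Qed.

Lemma fin2 : deg g = 2%N -> cnt A != 0%N -> (cnt A = 1%N \/ (mA A = (-2)%R /\ MA A = 2%R)) -> goal.
Proof. move=> d c h; rewrite /goal d; split; split => // e; by move: c; rewrite e. Qed.

Lemma fin3 : (3 <= deg g)%N -> (1 < cnt A)%N -> ~ (mA A = (-2)%R /\ MA A = 2%R) -> goal.
Proof.
move=> d c nm; rewrite /goal; split; split => e; try lia.
Qed.

Theorem main : join_irreducible g -> goal.
Proof.
move=> jig.
have g1 : g != 1%g.
  by apply/eqP => e; move: jig; rewrite e; apply/negP; exact: not_ji1.
have HH := PHg gB hnot g1.
have [a0 mM] := nondeg _ _ _ _ _ HH; have [m0 mlo mhi M0 Mhi] := bounds _ _ _ _ _ HH.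
case: (ltrP 0 (mA A)) => mpos.
  have [k ek] : exists k : nat, mA A = (Posz k).
    by exists (absz (mA A)); lia.
  have hk : (k < n)%N by lia.
  pose ko := Ordinal hk.
  have w0 : necw n (f g) ko by apply: (nec_pos _ _ _ _ _ HH); rewrite /= ?ek; lia.
  have r1 : (mA A < sval ((ko, false) : T))%R by rewrite sval_pos /= ek; lia.
  case: (ltrP (MA A) (Posz k.+2)) => hM.
    have eM : MA A = (Posz k.+1) by lia.
    have Hf := f1a _ _ _ _ _ HH k ek eM.
    have gk : g = gen ko.
      apply: (g_eq (genB _) Hf) => j.
      rewrite sval_gen sval_pos /swapv /F1a /=.
      by repeat (case: eqP => /=); lia.
    apply: fin1.
    - exact (deg_eq1 gB gk w0).
    - rewrite cntE; apply: rng0 => v; lia.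
    - lia.
  have hk1 : (k.+1 < n)%N by lia.
  pose ko1 := Ordinal hk1.
  have w1 : necw n (f g) ko1 by apply: (nec_pos _ _ _ _ _ HH); rewrite /= ?ek; lia.
  have r2 : (sval ((ko, false) : T) < MA A)%R by rewrite sval_pos /=; lia.
  case: (ltrP (MA A) (Posz k.+3)) => hM3.
    have eM : MA A = (Posz k.+2) by lia.
    have gK : g \in <<[set gen j | j in [set ko; ko1]]>>%g.
      have i0 : gen ko \in <<[set gen j | j in [set ko; ko1]]>>%g by apply: gen_in; rewrite !inE eqxx.
      have i1 : gen ko1 \in <<[set gen j | j in [set ko; ko1]]>>%g by apply: gen_in; rewrite !inE eqxx orbT.
      case: (f2a _ _ _ _ _ HH k ek eM) => Hf.
        have -> : g = (gen ko1 * gen ko)%g.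
          apply: (g_eq (groupM (genB _) (genB _)) Hf) => j.
          rewrite permM !sval_gen sval_pos /swapv /F2ai /=.
          by repeat (case: eqP => /=); lia.
        exact: groupM.
      have -> : g = (gen ko * gen ko1)%g.
        apply: (g_eq (groupM (genB _) (genB _)) Hf) => j.
        rewrite permM !sval_gen sval_pos /swapv /F2aii /=.
        by repeat (case: eqP => /=); lia.
      exact: groupM.
    apply: fin2.
    - refine (deg_eq2 gB _ gK w0 w1).
      by rewrite -val_eqE /=; lia.
    - by rewrite cntE -lt0n; apply: (rng_pos r1 r2).
    - left; rewrite cntE; apply: (rng1 r1 r2) => v; rewrite sval_pos /=; lia.
  have hk2 : (k.+2 < n)%N by lia.
  pose ko2 := Ordinal hk2.
  have w2 : necw n (f g) ko2 by apply: (nec_pos _ _ _ _ _ HH); rewrite /= ?ek; lia.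
  apply: fin3.
  - refine (deg_ge3 gB _ _ _ w0 w1 w2); by rewrite -val_eqE /=; lia.
  - rewrite cntE; apply: (@rng2 _ _ _ (ko, false) (ko1, false)); rewrite ?sval_pos /=; lia.
  - lia.
have mneg : (mA A < 0)%R by lia.
have n0 : (0 < n)%N by lia.
pose o0 := Ordinal n0.
have w0 : necw n (f g) o0 by apply: (nec_neg _ _ _ _ _ HH); rewrite /=; lia.
have M1 : (mA A < sval ((o0, false) : T))%R by rewrite sval_pos /=; lia.
have n1 : (1 < n)%N \/ ((mA A = -1)%R /\ (MA A = 1)%R) by lia.
have [H|H] : ((3 <= - mA A)%R \/ (3 <= MA A)%R) \/
   ((mA A = -1 \/ mA A = -2) /\ (MA A = 1 \/ MA A = 2))%R by lia.
  have h2 : (2 < n)%N by lia.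
  have h1 : (1 < n)%N by lia.
  pose o1 := Ordinal h1; pose o2 := Ordinal h2.
  have w1 : necw n (f g) o1 by apply: (nec_neg _ _ _ _ _ HH); rewrite /=; lia.
  have w2 : necw n (f g) o2 by apply: (nec_neg _ _ _ _ _ HH); rewrite /=; lia.
  apply: fin3.
  - refine (deg_ge3 gB _ _ _ w0 w1 w2); by rewrite -val_eqE /=; lia.
  - rewrite cntE; case: H => H.
      apply: (@rng2 _ _ _ (o0, true) (o1, true)); rewrite ?sval_negp /=; lia.
    apply: (@rng2 _ _ _ (o0, false) (o1, false)); rewrite ?sval_pos /=; lia.
  - lia.
have o0B : gen o0 \in Bn n by apply: genB.
case: H => -[em|em] [eM|eM].
- (* (-1, 1) *)
  have Hf := f1b _ _ _ _ _ HH em eM.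
  have gk : g = gen o0.
    apply: (g_eq (genB _) Hf) => j.
    rewrite sval_gen sval_pos /swapv /F1b /=.
    by repeat (case: eqP => /=); lia.
  apply: fin1.
  - exact (deg_eq1 gB gk w0).
  - rewrite cntE; apply: rng0 => v; lia.
  - lia.
- (* (-1, 2) *)
  have [n2 f0 f1 tl] := f2bc _ _ _ _ _ HH (mA A) (MA A) erefl erefl (or_introl (conj em eM)).
  pose o1 := Ordinal n2.
  have w1 : necw n (f g) o1 by apply: (nec_neg _ _ _ _ _ HH); rewrite /=; lia.
  have Hf : forall j, (j < n)%N -> f g j = F2b j.
    move=> j hj; rewrite /F2b; case: eqP => [->|?]; first by rewrite f0 eM.
    case: eqP => [->|?]; first by rewrite f1 em.
    apply: tl; lia.
  have gK : g \in <<[set gen j | j in [set o0; o1]]>>%g.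
    have i0 : gen o0 \in <<[set gen j | j in [set o0; o1]]>>%g by apply: gen_in; rewrite !inE eqxx.
    have i1 : gen o1 \in <<[set gen j | j in [set o0; o1]]>>%g by apply: gen_in; rewrite !inE eqxx orbT.
    have -> : g = (gen o1 * gen o0)%g.
      apply: (g_eq (groupM (genB _) (genB _)) Hf) => j.
      rewrite permM !sval_gen sval_pos /swapv /F2b /=.
      by repeat (case: eqP => /=); lia.
    exact: groupM.
  have c1 : cnt A = 1%N.
    rewrite cntE; apply: (@rng1 _ _ _ (o0, false)); rewrite ?sval_pos /=; try lia.
  apply: fin2.
  - refine (deg_eq2 gB _ gK w0 w1); by rewrite -val_eqE /=.
  - by rewrite c1.
  - by left.
- (* (-2, 1) *)
  have [n2 f0 f1 tl] := f2bc _ _ _ _ _ HH (mA A) (MA A) erefl erefl (or_intror (conj em eM)).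
  pose o1 := Ordinal n2.
  have w1 : necw n (f g) o1 by apply: (nec_neg _ _ _ _ _ HH); rewrite /=; lia.
  have Hf : forall j, (j < n)%N -> f g j = F2c j.
    move=> j hj; rewrite /F2c; case: eqP => [->|?]; first by rewrite f0 eM.
    case: eqP => [->|?]; first by rewrite f1 em.
    apply: tl; lia.
  have gK : g \in <<[set gen j | j in [set o0; o1]]>>%g.
    have i0 : gen o0 \in <<[set gen j | j in [set o0; o1]]>>%g by apply: gen_in; rewrite !inE eqxx.
    have i1 : gen o1 \in <<[set gen j | j in [set o0; o1]]>>%g by apply: gen_in; rewrite !inE eqxx orbT.
    have -> : g = (gen o1 * gen o0 * gen o1)%g.
      apply: (g_eq (groupM (groupM (genB _) (genB _)) (genB _)) Hf) => j.
      rewrite permM sval_gen permM !sval_gen sval_pos /swapv /F2c /=.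
      by repeat (case: eqP => /=); lia.
    exact: (groupM (groupM i1 i0) i1).
  have c1 : cnt A = 1%N.
    rewrite cntE; apply: (@rng1 _ _ _ (o0, true)); rewrite ?sval_negp /=; try lia.
  apply: fin2.
  - refine (deg_eq2 gB _ gK w0 w1); by rewrite -val_eqE /=.
  - by rewrite c1.
  - by left.
- (* (-2, 2) *)
  have [n2 HF] := f2d _ _ _ _ _ HH em eM.
  pose o1 := Ordinal n2.
  have w1 : necw n (f g) o1 by apply: (nec_neg _ _ _ _ _ HH); rewrite /=; lia.
  have gK : g \in <<[set gen j | j in [set o0; o1]]>>%g.
    have i0 : gen o0 \in <<[set gen j | j in [set o0; o1]]>>%g by apply: gen_in; rewrite !inE eqxx.
    have i1 : gen o1 \in <<[set gen j | j in [set o0; o1]]>>%g by apply: gen_in; rewrite !inE eqxx orbT.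
    case: HF => Hf.
      have -> : g = (gen o0 * gen o1 * gen o0)%g.
        apply: (g_eq (groupM (groupM (genB _) (genB _)) (genB _)) Hf) => j.
        rewrite permM sval_gen permM !sval_gen sval_pos /swapv /F2d1 /=.
        by repeat (case: eqP => /=); lia.
      exact: (groupM (groupM i0 i1) i0).
    have -> : g = (gen o0 * gen o1)%g.
      apply: (g_eq (groupM (genB _) (genB _)) Hf) => j.
      rewrite permM !sval_gen sval_pos /swapv /F2d2 /=.
      by repeat (case: eqP => /=); lia.
    exact: (groupM i0 i1).
  apply: fin2.
  - refine (deg_eq2 gB _ gK w0 w1); by rewrite -val_eqE /=.
  - rewrite cntE -lt0n; apply: (@rng_pos _ _ _ (o0, false)); rewrite ?sval_pos /=; lia.
  - by right.
Qed.

End Final.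

End Part7.
Import Part7.

Set Implicit Arguments. Unset Strict Implicit. Unset Printing Implicit Defensive.

Theorem lemma3p7 (n : nat) (g : {perm sT n}) (A : {set sT n}) :
  g \in Bn n -> join_irreducible g ->
  signed_subset A -> full_notation g = assoc_notation A ->
  (deg g = 1%N <-> cnt A = 0%N) /\
  (deg g = 2%N <-> (cnt A = 1%N \/ (mA A = (-2)%R /\ MA A = 2%R))).
Proof.
move=> gB jig _ hnot; exact (main gB hnot jig).
Qed.
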